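(* Let $e,\ell\geq 2$ be integers and let $|\boldsymbol{\lambda},\mathbf{s}\rangle$ be any charged $\ell$-partition. Then the first good vertical $e$-strip of $|\boldsymbol{\lambda},\mathbf{s}\rangle$ is addable. Equivalently, the map $\tilde c_{(1)}$ (adding the first good vertical $e$-strip) is well defined.
   Context: A charged $\ell$-partition $|\boldsymbol{\lambda},\mathbf{s}\rangle$ is an $\ell$-tuple of partitions $\boldsymbol{\lambda}=(\lambda^1,\dots,\lambda^\ell)$ together with $\mathbf{s}=(s_1,\dots,s_\ell)\in\mathbb{Z}^\ell$. A box is a triple $(a,b,j)$ (row $a\geq1$, column $b\geq1$, component $j\in\{1,\dots,\ell\}$); $(a,b,j)\in\boldsymbol{\lambda}$ means it lies in the Young diagram of $\lambda^j$. The content of $\gamma=(a,b,j)$ is $c(\gamma)=b-a+s_j$. Let $\mathcal{W}(\boldsymbol{\lambda},\mathbf{s})$ be the set of boxes $(a,b,j)\notin\boldsymbol{\lambda}$ such that either $b=1$, or $b\geq2$ and $(a,b-1,j)\in\boldsymbol{\lambda}$ (the boxes immediately to the right of each row, rows of length $0$ included). A (level $\ell$) vertical $e$-strip is a sequence of $e$ boxes $\gamma_1=(a_1,b_1,j_1),\dots,\gamma_e=(a_e,b_e,j_e)$ with no $i$ such that $a_{i+1}=a_i$ and $j_{i+1}=j_i$; it is admissible if $c(\gamma_i)=c(\gamma_{i+1})+1$ for all $1\le i<e$ and $j_i\geq j_{i'}$ for all $i<i'$. Let $\mathcal{V}(\boldsymbol{\lambda},\mathbf{s})$ be the set of admissible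 vertical $e$-strips all of whose boxes lie in $\mathcal{W}(\boldsymbol{\lambda},\mathbf{s})$. A vertical $e$-strip $X$ is addable if $X\cap\boldsymbol{\lambda}=\emptyset$ and $\boldsymbol{\lambda}\sqcup X$ is still an $\ell$-tuple of partitions. Order boxes by $\gamma>\gamma'$ iff $c(\gamma)>c(\gamma')$, or $c(\gamma)=c(\gamma')$ and $j<j'$ (where $j,j'$ are the components of $\gamma,\gamma'$); order $e$-tuples of boxes lexicographically with respect to this order; this is a total order on $\mathcal{V}(\boldsymbol{\lambda},\mathbf{s})$. The first good vertical $e$-strip is the maximal element $X_1$ of $\mathcal{V}(\boldsymbol{\lambda},\mathbf{s})$. *)

(* Defs.v *)
From mathcomp Require Import all_boot all_order all_algebra.
Set Implicit Arguments. Unset Strict Implicit. Unset Printing Implicit Defensive.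
Import Order.TTheory GRing.Theory Num.Theory.

(* A partition: a weakly decreasing finite sequence of positive integers
   (its row lengths; row a, 1-indexed, has length nth 0 p a.-1). *)
Definition is_partition (p : seq nat) : bool :=
  sorted geq p && all (fun x => 0 < x) p.

(* An l-partition: lam : 'I_l -> seq nat, component j+1 of the paper is the
   ordinal j (0-indexed; the order on components is preserved).
   Charge s : 'I_l -> int. *)

Definition box (l : nat) := (nat * nat * 'I_l)%type.
Definition brow l (g : box l) : nat := g.1.1.
Definition bcol l (g : box l) : nat := g.1.2.
Definition bcomp l (g : box l) : 'I_l := g.2.

Definition content l (s : 'I_l -> int) (g : box l) : int :=
  ((bcol g)%:Z - (brow g)%:Z + s (bcomp g))%R.

Definition in_diag l (lam : 'I_l -> seq nat) (g : box l) : bool :=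
  [&& 1 <= brow g, 1 <= bcol g & bcol g <= nth 0 (lam (bcomp g)) (brow g).-1].

Definition inW l (lam : 'I_l -> seq nat) (g : box l) : bool :=
  [&& 1 <= brow g, 1 <= bcol g, ~~ in_diag lam g &
      (bcol g == 1) || ((2 <= bcol g) && in_diag lam (brow g, (bcol g).-1, bcomp g))].

Definition strip_step l (s : 'I_l -> int) (g g' : box l) : bool :=
  ~~ ((brow g == brow g') && (bcomp g == bcomp g')) &&
  (content s g == (content s g' + 1)%R).

Definition admissible_strip l (s : 'I_l -> int) (e : nat) (X : seq (box l)) : bool :=
  [&& size X == e, sorted (strip_step s) X &
      pairwise (fun g g' : box l => bcomp g' <= bcomp g) X].

Definition inV l (lam : 'I_l -> seq nat) (s : 'I_l -> int) (e : nat)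
  (X : seq (box l)) : bool :=
  admissible_strip s e X && all (inW lam) X.

Definition box_gt l (s : 'I_l -> int) (g g' : box l) : bool :=
  (content s g' < content s g)%R ||
  ((content s g == content s g') && (bcomp g < bcomp g')).

Fixpoint lex_gt l (s : 'I_l -> int) (X Y : seq (box l)) : bool :=
  match X, Y with
  | x :: X', y :: Y' => box_gt s x y || ((x == y) && lex_gt s X' Y')
  | _, _ => false
  end.

Definition first_good l (lam : 'I_l -> seq nat) (s : 'I_l -> int) (e : nat)
  (X : seq (box l)) : Prop :=
  inV lam s e X /\ forall Y, inV lam s e Y -> Y = X \/ lex_gt s X Y.

Definition addable l (lam : 'I_l -> seq nat) (X : seq (box l)) : Prop :=
  (forall g, g \in X -> [&& 1 <= brow g, 1 <= bcol g & ~~ in_diag lam g]) /\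
  exists mu : 'I_l -> seq nat,
    (forall j, is_partition (mu j)) /\
    forall g : box l, in_diag mu g = in_diag lam g || (g \in X).

(* Main.v *)
Require Import Defs.
From mathcomp Require Import all_boot all_order all_algebra.
From mathcomp Require Import zify.
Import Order.TTheory GRing.Theory Num.Theory.

Module Helpers.
Set Implicit Arguments. Unset Strict Implicit.

Lemma browE l a b (j : 'I_l) : brow (a, b, j) = a. Proof. by []. Qed.
Lemma bcolE l a b (j : 'I_l) : bcol (a, b, j) = b. Proof. by []. Qed.
Lemma bcompE l a b (j : 'I_l) : bcomp (a, b, j) = j. Proof. by []. Qed.

Lemma inWE l (lam : 'I_l -> seq nat) (g : box l) :
  inW lam g = (1 <= brow g) && (bcol g == nth 0 (lam (bcomp g)) (brow g).-1 + 1).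
Proof.
case: g => [[a b] j]; rewrite /inW /in_diag /brow /bcol /bcomp /=.
set n := nth 0 _ _.
case: (leqP 1 a) => ha /=; last by [].
apply/idP/idP.
- move=> /and3P[hb hn ho]; move: hn ho; rewrite hb /=; case: (leqP b n) => //= hbn _ /orP [/eqP hb1|/andP[h2 /andP[_ h3]]]; apply/eqP; lia.
- move/eqP => ->. apply/and3P; split; first lia. rewrite addn1 ltnn //.
  case: n => [|n] //=. rewrite orbC; apply/orP; left. apply/and3P; split; lia.
Qed.

Lemma W_det l (lam : 'I_l -> seq nat) (x y : box l) :
  inW lam x -> inW lam y -> brow x = brow y -> bcomp x = bcomp y -> x = y.
Proof.
case: x => [[a b] j]; case: y => [[a' b'] j']; rewrite !inWE /brow /bcol /bcomp /=.
move=> /andP[_ /eqP ->] /andP[_ /eqP ->] ha hj; subst; by [].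
Qed.

Lemma W_step l (lam : 'I_l -> seq nat) s (x y : box l) :
  inW lam x -> inW lam y -> content s x = (content s y + 1)%R -> strip_step s x y.
Proof.
move=> hx hy hc; rewrite /strip_step hc eqxx andbT.
apply/negP => /andP[/eqP hr /eqP hj].
have exy := W_det hx hy hr hj. move: hc; rewrite exy. lia.
Qed.

Lemma lex_cat l s (P A B : seq (box l)) : lex_gt s (P ++ A) (P ++ B) = lex_gt s A B.
Proof.
elim: P => [|p P IH] //=. rewrite eqxx IH /box_gt ltxx eqxx ltnn //.
Qed.

Lemma path_take T (r : rel T) x (S : seq T) n : path r x S -> path r x (take n S).
Proof. by rewrite -{1}(cat_take_drop n S) cat_path => /andP[]. Qed.

Lemma pairwise_take T (r : rel T) (S : seq T) n : pairwise r S -> pairwise r (take n S).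
Proof. by rewrite -{1}(cat_take_drop n S) pairwise_cat => /and3P[]. Qed.

Lemma sorted_replace (T : eqType) (r : rel T) (P A : seq T) x y :
  (forall z, z \in P -> r z x -> r z y) -> path r y A ->
  sorted r (P ++ x :: A) -> sorted r (P ++ y :: A).
Proof.
case: P => [|p P] h hA /=; first by [].
rewrite !cat_path /= => /and3P[-> h1 _] /=; rewrite hA andbT.
apply: h h1. exact: mem_last.
Qed.

Lemma sorted_cat_path (T : Type) (r : rel T) P x A : sorted r (P ++ x :: A) -> path r x A.
Proof. case: P => [|p P] //=; rewrite cat_path /= => /andP[_ /andP[_ ->]] //. Qed.

Lemma key l (lam : 'I_l -> seq nat) s e X (g : box l) :
  first_good lam s e X -> g \in X -> 2 <= brow g ->
  nth 0 (lam (bcomp g)) (brow g).-2 = nth 0 (lam (bcomp g)) (brow g).-1 ->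
  ((brow g).-1, nth 0 (lam (bcomp g)) (brow g).-2 + 1, bcomp g) \in X.
Proof.
move=> [/andP[/and3P[/eqP hsz hsort hpw] hW] hmax] gX ha hL.
set g' := (_, _, _).
apply/negPn/negP => g'X.
have gW : inW lam g := allP hW g gX.
have g'W : inW lam g'.
  rewrite inWE /g' /=. rewrite browE bcolE. apply/andP; split; [lia | by []].
have hc : content s g' = (content s g + 1)%R.
  move: gW; rewrite inWE => /andP[_ /eqP hb].
  rewrite /content /g' browE bcolE bcompE hb hL.
  lia.
have kX : index g X < size X by rewrite index_mem.
case k0 : (index g X) => [|k].
- have hX : X = g :: drop 1 X.
    have hg0 : nth g X 0 = g by rewrite -k0 nth_index.
    by rewrite -[in LHS](drop0 X) (drop_nth g) ?hg0 // -k0.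
  move: hsz hsort hpw hW hmax; rewrite hX; set S := drop 1 X => hsz hsort hpw hW hmax.
  have := hmax (g' :: take (size S) (g :: S)).
  have gg' : (g == g') = false.
    apply/negP => /eqP hgg. have := congr1 (@brow l) hgg. rewrite /g' browE. lia.
  have bgt : box_gt s g g' = false.
    rewrite /box_gt hc. apply/negP => /orP[|/andP[/eqP h _]]; lia.
  case.
  + rewrite /inV /admissible_strip /= size_take /= ltnSn -hsz /= eqxx g'W /=.
    move: hpw => /= /andP[hpg hpS].
    apply/andP; split; first (apply/and3P; split).
    * case hS : (size S) => [|n] //=.
      rewrite (W_step g'W gW hc) /=.
      exact: path_take.
    * apply/allP => y /mem_take; rewrite in_cons => /orP[/eqP -> // | yS].
      exact: (allP hpg).
    * apply: pairwise_take; by rewrite /= hpg hpS.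
    * apply/allP => y /mem_take yX; exact: (allP hW).
  + move=> [hgg' _]. by rewrite hgg' eqxx in gg'.
  + by rewrite /= bgt gg'.
- rewrite k0 in kX.
  have hk1 : nth g X k.+1 = g by rewrite -k0 nth_index.
  have hX : X = take k X ++ nth g X k :: g :: drop k.+2 X.
    rewrite -{1}(cat_take_drop k X) (drop_nth g) ?(drop_nth g (n:=k.+1)) ?hk1 //; lia.
  set P := take k X in hX; set h := nth g X k in hX; set S := drop k.+2 X in hX.
  have hX' := hX.
  move: hsz hsort hpw hW; rewrite {1 2 3 4}hX => hsz hsort hpw hW.
  have hX2 : X = P ++ h :: g :: S by exact: hX'.
  have hhg : path (strip_step s) h (g :: S) by exact: sorted_cat_path hsort.
  move: (hhg) => /= /andP[/andP[_ /eqP hch] hgS].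
  move: (hpw); rewrite pairwise_cat => /and3P[hpw1 hpw2 hpw3].
  move: (hpw3) => /= /andP[/andP[hhg' hhS] /andP[hgS' hpS]].
  have hX3 : forall z, z \in P ++ h :: g :: S -> z \in X by move=> z; rewrite -hX2.
  have hX4 : h \in X by apply: hX3; rewrite mem_cat in_cons eqxx orbT.
  have := hmax (P ++ g' :: g :: S).
  case.
  + rewrite /inV /admissible_strip size_cat /=. rewrite size_cat /= in hsz. rewrite hsz eqxx /=.
    apply/andP; split; first (apply/andP; split).
    * apply: (sorted_replace _ _ hsort).
      - move=> z zP /andP[_ /eqP hz]. apply: W_step.
        + apply: (allP hW); rewrite mem_cat zP //.
        + exact: g'W.
        + rewrite hz hch hc //.
      - by rewrite /= (W_step g'W gW hc) hgS.
    * rewrite pairwise_cat; apply/and3P; split => //.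
      - apply/allrelP => p y pP; rewrite in_cons => /orP[/eqP -> | yin].
        + have := allrelP hpw1 p g pP; rewrite !in_cons eqxx orbT; exact.
        + apply: (allrelP hpw1 p y pP); by rewrite in_cons yin orbT.
      - apply/andP; split; [apply/andP; split; [exact: leqnn | exact: hgS'] | by apply/andP; split].
    * rewrite all_cat in hW; move: hW => /andP[hWP /= /and3P[_ hWg hWS]].
      by rewrite all_cat hWP /= g'W hWg hWS.
  + move=> HY. move: g'X; rewrite -HY mem_cat in_cons eqxx orbT //.
  + rewrite {1}hX2 lex_cat /=.
    have -> : (h == g') = false.
      apply/negP => /eqP hh. by rewrite -hh hX4 in g'X.
    rewrite /box_gt hc -hch ltxx eqxx orbF /=.
    move: hhg' => /= hhg'. by rewrite ltnNge hhg'.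
Qed.

Lemma geq_transitive : transitive geq.
Proof. move=> y x z h1 h2; exact: leq_trans h2 h1. Qed.

Lemma nth_geq (p : seq nat) i k : sorted geq p -> i <= k -> nth 0 p k <= nth 0 p i.
Proof.
move=> hs hik; case: (ltnP k (size p)) => hk.
- apply: (sorted_leq_nth geq_transitive leqnn 0 hs) => //; rewrite inE //; exact: leq_ltn_trans hik hk.
- by rewrite nth_default.
Qed.

Lemma nth_filter_pos (p : seq nat) i : sorted geq p -> nth 0 [seq x <- p | 0 < x] i = nth 0 p i.
Proof.
elim: p i => [|x p IH] i //= hs.
case: (posnP x) => hx.
- subst x.
  have hall : all (geq 0) p := order_path_min geq_transitive hs.
  have -> : [seq x <- p | 0 < x] = [::].
    apply/eqP; rewrite -size_eq0 size_filter eqn0Ngt -has_count.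
    apply/hasPn => y yp; have := allP hall y yp; rewrite /= leqn0 => /eqP -> //.
  case: i => [|i] //=.
  case: (ltnP i (size p)) => hi; last by rewrite nth_default.
  have := allP hall _ (mem_nth 0 hi); rewrite /= leqn0 => /eqP -> //.
- case: i => [|i] //=. apply: IH. exact: path_sorted hs.
Qed.

Lemma path_mkseq (f : nat -> nat) : (forall i, f i.+1 <= f i) ->
  forall n m, path geq (f m) (map f (iota m.+1 n)).
Proof.
move=> hf; elim=> [|n IH] m //=. by rewrite hf IH.
Qed.

Lemma sorted_mkseq (f : nat -> nat) n : (forall i, f i.+1 <= f i) -> sorted geq (mkseq f n).
Proof. move=> hf; case: n => [|n] //=; exact: path_mkseq. Qed.

Lemma nth_mkseq_all (f : nat -> nat) N i : (forall i, N <= i -> f i = 0) -> nth 0 (mkseq f N) i = f i.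
Proof.
move=> hf; case: (ltnP i N) => hi; first by rewrite nth_mkseq.
by rewrite nth_default ?size_mkseq // hf.
Qed.

Lemma brow_sumn l (X : seq (box l)) g : g \in X -> brow g <= sumn (map (@brow l) X).
Proof.
elim: X => [|x X IH] //=; rewrite in_cons => /orP[/eqP -> | gX]; first exact: leq_addr.
apply: leq_trans (IH gX) _; exact: leq_addl.
Qed.

Lemma addable_of l (lam : 'I_l -> seq nat) s e X :
  (forall j, is_partition (lam j)) -> first_good lam s e X -> addable lam X.
Proof.
move=> hp fg. have [/andP[_ hW] _] := fg.
split.
  move=> g gX; have := allP hW g gX; rewrite /inW => /and4P[-> -> -> _] //.
pose R := fun (j : 'I_l) i => has (fun g : box l => (bcomp g == j) && (brow g == i.+1)) X.
pose f := fun j i => nth 0 (lam j) i + R j i.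
have hsort : forall j, sorted geq (lam j) by move=> j; case/andP: (hp j).
have hmono : forall j i, f j i.+1 <= f j i.
  move=> j i; rewrite /f.
  have hle : nth 0 (lam j) i.+1 <= nth 0 (lam j) i by apply: nth_geq.
  case hR1 : (R j i.+1); last by rewrite addn0; apply: leq_trans hle (leq_addr _ _).
  case hR0 : (R j i); first by rewrite leq_add2r.
  rewrite addn0 addn1.
  rewrite ltn_neqAle hle andbT; apply/negP => /eqP heq.
  move/hasP: hR1 => [g gX /andP[/eqP hj /eqP hr]].
  have := key fg gX; rewrite hr hj /= => /(_ isT (esym heq)) hin.
  move/negP: hR0; apply; apply/hasP; eexists; first exact: hin.
  rewrite browE bcompE !eqxx //.
pose N := fun j => size (lam j) + sumn (map (@brow l) X).
have hzero : forall j i, N j <= i -> f j i = 0.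
  move=> j i hi; rewrite /f nth_default; last by apply: leq_trans hi; apply: leq_addr.
  case hR : (R j i) => //.
  move/hasP: hR => [g gX /andP[_ /eqP hr]].
  have := brow_sumn gX; rewrite hr /N in hi *; lia.
exists (fun j => [seq x <- mkseq (f j) (N j) | 0 < x]).
split.
  move=> j; rewrite /is_partition filter_all andbT.
  apply: sorted_filter; first exact: geq_transitive.
  exact: sorted_mkseq.
case=> [[a b] j]; rewrite /in_diag browE bcolE bcompE.
rewrite nth_filter_pos; last exact: sorted_mkseq.
rewrite nth_mkseq_all; last exact: hzero.
rewrite /f.
apply/idP/idP.
- move/and3P => [ha hb hle].
  case: (leqP b (nth 0 (lam j) a.-1)) => hbL; first by rewrite ha hb.
  rewrite orbC; apply/orP; left.
  case hR : (R j a.-1); last by move: hle; rewrite hR addn0 leqNgt hbL.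
  move: hle; rewrite hR addn1 => hle.
  move/hasP: hR => [g gX /andP[/eqP hj /eqP hr]].
  have := allP hW g gX; rewrite inWE hj => /andP[_ /eqP hcol].
  have hra : brow g = a by lia.
  have hb' : b = bcol g by rewrite hcol hra; lia.
  suff -> : (a, b, j) = g by [].
  case: g {gX hcol hr} hj hra hb' => [[a' b'] j']; rewrite browE bcolE bcompE => h1 h2 h3; subst; by [].
- case/orP.
  + move/and3P => [-> -> hle] /=. exact: leq_trans hle (leq_addr _ _).
  + move=> gX. have := allP hW _ gX; rewrite inWE browE bcolE bcompE => /andP[ha /eqP hb].
    have -> : R j a.-1.
      apply/hasP; exists (a, b, j) => //. rewrite browE bcompE eqxx /=. apply/eqP; lia.
    rewrite ha hb /=. apply/andP; split; lia.
Qed.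

Lemma box_gt_trans l s (x y z : box l) : box_gt s x y -> box_gt s y z -> box_gt s x z.
Proof.
rewrite /box_gt => /orP[h1|/andP[/eqP h1 h2]] /orP[h3|/andP[/eqP h3 h4]].
- apply/orP; left; lia.
- apply/orP; left; lia.
- apply/orP; left; lia.
- apply/orP; right; apply/andP; split; [apply/eqP; lia | lia].
Qed.

Lemma lex_trans l s (X Y Z : seq (box l)) : lex_gt s X Y -> lex_gt s Y Z -> lex_gt s X Z.
Proof.
elim: X Y Z => [|x X IH] [|y Y] [|z Z] //=.
move=> /orP[h1|/andP[/eqP h1 h2]] /orP[h3|/andP[/eqP h3 h4]].
- by rewrite (box_gt_trans h1 h3).
- by rewrite -h3 h1.
- by rewrite h1 h3.
- by rewrite h1 h3 eqxx (IH _ _ h2 h4) orbT.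
Qed.

Lemma W_content_inj l (lam : 'I_l -> seq nat) s (x y : box l) :
  (forall j, is_partition (lam j)) ->
  inW lam x -> inW lam y -> bcomp x = bcomp y -> content s x = content s y -> x = y.
Proof.
move=> hp hx hy hj hc.
have hs : forall j, sorted geq (lam j) by move=> j; case/andP: (hp j).
apply: (W_det hx hy) => //.
move: hx hy hc; rewrite !inWE /content hj => /andP[hax /eqP hbx] /andP[hay /eqP hby].
rewrite hbx hby.
move=> hc'.
case: (ltngtP (brow x) (brow y)) => hlt //;
  [have h := @nth_geq _ (brow x).-1 (brow y).-1 (hs (bcomp y)) ltac:(lia)
  |have h := @nth_geq _ (brow y).-1 (brow x).-1 (hs (bcomp y)) ltac:(lia)]; lia.
Qed.

Lemma box_total l (lam : 'I_l -> seq nat) s (x y : box l) :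
  (forall j, is_partition (lam j)) -> inW lam x -> inW lam y ->
  [\/ x = y, box_gt s x y | box_gt s y x].
Proof.
move=> hp hx hy.
case: (ltgtP (content s x) (content s y)) => hc.
- by apply: Or33; rewrite /box_gt hc.
- by apply: Or32; rewrite /box_gt hc.
- case: (ltngtP (bcomp x) (bcomp y)) => hj.
  + by apply: Or32; rewrite /box_gt hc eqxx hj orbT.
  + by apply: Or33; rewrite /box_gt hc eqxx hj orbT.
  + apply: Or31; apply: (W_content_inj hp hx hy _ hc); apply: val_inj; exact: hj.
Qed.

Lemma lex_total l (lam : 'I_l -> seq nat) s (X Y : seq (box l)) :
  (forall j, is_partition (lam j)) -> size X = size Y -> all (inW lam) X -> all (inW lam) Y ->
  [\/ X = Y, lex_gt s X Y | lex_gt s Y X].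
Proof.
move=> hp; elim: X Y => [|x X IH] [|y Y] //=; first by move=> *; apply: Or31.
move=> [hsz] /andP[hx hX] /andP[hy hY].
case: (box_total s hp hx hy) => [<-|h|h].
- case: (IH Y hsz hX hY) => [<-|h|h].
  + by apply: Or31.
  + by apply: Or32; rewrite eqxx h orbT.
  + by apply: Or33; rewrite eqxx h orbT.
- by apply: Or32; rewrite h.
- by apply: Or33; rewrite h.
Qed.

Lemma list_max (T : eqType) (r : rel T) (D : seq T) :
  transitive r -> {in D &, forall x y, [\/ x = y, r x y | r y x]} -> D != [::] ->
  exists2 m, m \in D & forall y, y \in D -> y = m \/ r m y.
Proof.
move=> htr; elim: D => [|x D IH] // htot _.
case hD : (D == [::]).
- move/eqP: hD => ->. exists x; first by rewrite mem_head.
  by move=> y; rewrite inE => /eqP ->; left.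
- have htot' : {in D &, forall x y, [\/ x = y, r x y | r y x]}.
    by move=> a b aD bD; apply: htot; rewrite inE ?aD ?bD orbT.
  have [m mD hm] := IH htot' (negbT hD).
  have mxD : m \in x :: D by rewrite inE mD orbT.
  have hxm := htot x m (mem_head _ _) mxD.
  case: hxm => [hxm|hxm|hmx].
  + exists x; first exact: mem_head.
    move=> y; rewrite inE => /orP[/eqP ->|yD]; [by left | rewrite hxm; exact: hm].
  + exists x; first exact: mem_head.
    move=> y; rewrite inE => /orP[/eqP ->|yD]; first by left.
    case: (hm y yD) => [->|h]; right => //; exact: htr hxm h.
  + exists m; first by rewrite inE mD orbT.
    move=> y; rewrite inE => /orP[/eqP ->|yD]; [by right | exact: hm].
Qed.

Fixpoint allseqs (T : Type) (D : seq T) n : seq (seq T) :=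
  if n is n'.+1 then [seq x :: t | x <- D, t <- allseqs D n'] else [:: [::]].

Lemma mem_allseqs (T : eqType) (D : seq T) (Y : seq T) :
  all (mem D) Y -> Y \in allseqs D (size Y).
Proof.
elim: Y => [|y Y IH] //= /andP[yD hY].
exact: (allpairs_f (fun x t => x :: t) yD (IH hY)).
Qed.

Lemma path_content l s (x : box l) (Y : seq (box l)) :
  path (strip_step s) x Y -> forall g, g \in x :: Y -> (content s x - (size Y)%:Z <= content s g)%R.
Proof.
elim: Y x => [|y Y IH] x /=.
- move=> _ g; rewrite inE => /eqP ->; lia.
- move=> /andP[/andP[_ /eqP hc] hp] g; rewrite inE => /orP[/eqP ->|gY]; first lia.
  have := IH y hp g gY. lia.
Qed.

Lemma iota_sorted_rel (r : rel nat) : (forall i, r i i.+1) -> forall n m, sorted r (iota m n).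
Proof.
move=> hr; have hp : forall n m, path r m (iota m.+1 n).
  by elim=> [|n IH] m //=; rewrite hr IH.
by case=> [|n] m //=.
Qed.

Lemma pairwise_all (T : eqType) (r : rel T) (s : seq T) :
  (forall x y, x \in s -> y \in s -> r x y) -> pairwise r s.
Proof.
elim: s => [|x s IH] //= h; apply/andP; split.
- apply/allP => y ys; apply: h; rewrite inE ?ys ?eqxx ?orbT //.
- apply: IH => a b a_s b_s; apply: h; rewrite inE ?a_s ?b_s orbT //.
Qed.

Lemma exists_fg l (lam : 'I_l -> seq nat) s e :
  2 <= e -> 0 < l -> (forall j, is_partition (lam j)) -> exists X, first_good lam s e X.
Proof.
case: e => [|e'] // he hl hp.
have hs : forall j, sorted geq (lam j) by move=> j; case/andP: (hp j).
pose j0 : 'I_l := Ordinal hl.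
pose f := fun i : nat => ((size (lam j0) + i.+1, 1, j0) : box l).
pose Y0 := map f (iota 0 e'.+1).
have Y0V : inV lam s e'.+1 Y0.
  rewrite /inV /admissible_strip size_map size_iota eqxx /=.
  apply/andP; split; first (apply/andP; split).
  - change (sorted (strip_step s) (map f (iota 0 e'.+1))); rewrite sorted_map; apply: iota_sorted_rel => i /=. rewrite /f /strip_step. apply/andP; split.
    + rewrite !browE !bcompE. apply/negP => /andP[/eqP h _]; lia.
    + apply/eqP; rewrite /content !browE !bcolE !bcompE; lia.
  - change (pairwise (fun g g' : box l => bcomp g' <= bcomp g) (map f (iota 0 e'.+1))); apply: pairwise_all => x y /mapP[i _ ->] /mapP[k _ ->]; rewrite /f !bcompE //.
  - change (all (inW lam) (map f (iota 0 e'.+1))); apply/allP => x /mapP[i _ ->]; rewrite /f inWE browE bcolE bcompE /= nth_default //; lia.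
pose C := ((1%:Z - (size (lam j0)).+1%:Z + s j0) - (e'.+1)%:Z)%R.
have [M hM] : exists M, forall j, nth 0 (lam j) 0 + `|s j|%N <= M.
  exists (\max_(j < l) (nth 0 (lam j) 0 + `|s j|%N)) => j.
  exact: (leq_bigmax (F := fun j : 'I_l => nth 0 (lam j) 0 + `|s j|%N) j).
pose B := M + `|C|%N + 2.
pose AB := [seq (a, b) | a <- iota 0 B, b <- iota 0 B].
pose D := [seq ((ab.1, ab.2, j) : box l) | ab <- AB, j <- enum 'I_l].
have hbound : forall g, inW lam g -> (C <= content s g)%R -> g \in D.
  case=> [[a b] j]; rewrite inWE browE bcolE bcompE => /andP[ha /eqP hb] hc.
  have h1 := @nth_geq (lam j) 0 a.-1 (hs j) (leq0n _).
  have h2 := hM j.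
  rewrite /content browE bcolE bcompE /C in hc.
  have hab : (a, b) \in AB.
    apply: (allpairs_f (fun a b => (a,b))); rewrite mem_iota /B /C; lia.
  exact: (allpairs_f (fun ab j => ((ab.1, ab.2, j) : box l)) hab (mem_enum _ j)).
pose P := fun Y => inV lam s e'.+1 Y && ((Y == Y0) || lex_gt s Y Y0).
have hcand : forall Y, P Y -> Y \in [seq Y <- allseqs D e'.+1 | P Y].
  move=> Y hY; rewrite mem_filter hY.
  move: (hY) => /andP[/andP[/and3P[/eqP hsz hsort _] hW] hlex].
  rewrite -hsz; apply: mem_allseqs.
  case: Y hsz hsort hW hlex {hY} => [|y Y] //= [hsz] hsort hW hlex.
  have hy : (content s (f 0) <= content s y)%R.
    move: hlex; rewrite /Y0 /f /=.
    case/orP => [/eqP [-> _] | ]; first exact: lexx.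
    move=> /orP[h | /andP[/eqP -> _]]; last exact: lexx.
    move: h; rewrite /box_gt => /orP[h|/andP[/eqP h _]]; [exact: ltW h | rewrite -h; exact: lexx].
  change (all (mem D) (y :: Y)); apply/allP => g gin. apply: hbound; first exact: (allP (hW : all (inW lam) (y :: Y)) g gin).
  have := path_content hsort gin. move: hy; rewrite /C /content /f !browE !bcolE !bcompE hsz. lia.
have Y0P : P Y0 by rewrite /P Y0V eqxx.
have htot : {in [seq Y <- allseqs D e'.+1 | P Y] &, forall x y, [\/ x = y, lex_gt s x y | lex_gt s y x]}.
  move=> x y; rewrite !mem_filter => /andP[/andP[/andP[/and3P[/eqP hx _ _] hWx] _] _].
  move=> /andP[/andP[/andP[/and3P[/eqP hy _ _] hWy] _] _].
  apply: lex_total => //; by rewrite hx hy.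
have hne : [seq Y <- allseqs D e'.+1 | P Y] != [::].
  apply/negP => /eqP h0; have := hcand Y0 Y0P; by rewrite h0.
have [m mC hm] := list_max (fun y x z => @lex_trans l s x y z) htot hne.
exists m; split.
  by move: mC; rewrite mem_filter => /andP[/andP[]].
move=> Y YV.
case hPY : (P Y); first exact: hm (hcand _ hPY).
right.
have hY0 : lex_gt s Y0 Y.
  move: (YV) (Y0V) => /andP[/and3P[/eqP hx _ _] hWx] /andP[/and3P[/eqP hy _ _] hWy].
  have hsz : size Y = size Y0 by rewrite hx hy.
  case: (lex_total s hp hsz hWx hWy) => [|h|h] //.
  + by move=> hYY; rewrite /P YV hYY eqxx in hPY.
  + by rewrite /P YV h orbT in hPY.
case: (hm Y0 (hcand _ Y0P)) => [<- //| h].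
exact: lex_trans h hY0.
Qed.

End Helpers.

Theorem lemma5p8 (e l : nat) (lam : 'I_l -> seq nat) (s : 'I_l -> int) :
  2 <= e -> 2 <= l -> (forall j, is_partition (lam j)) ->
  (exists X, first_good lam s e X) /\
  (forall X, first_good lam s e X -> addable lam X).
Proof.
move=> he hl hp; split.
- apply: (@Helpers.exists_fg l lam s e he _ hp). exact: leq_trans hl.
- move=> X; exact: Helpers.addable_of hp.
Qed.
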